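(* Fix $\epsilon\in(0,1/4)$ and $\mathscr A=(a,b,c,d)\in\mathbb{R}^4$ with $|c|\le\epsilon$, $|d|\le\epsilon$. Then: (1) $\sigma_{\mathscr A}$ commutes with $\tau_{\mathscr A}\sigma_{\mathscr A}^{-1}\tau_{\mathscr A}^{-1}$; (2) $\sigma'_{\mathscr A}$ commutes with $\tau'^{-1}_{\mathscr A}\sigma'^{-1}_{\mathscr A}\tau'_{\mathscr A}$; (3) $\sigma_{\mathscr A}$ commutes with $\tau'_{\mathscr A}$, and $\sigma'_{\mathscr A}$ commutes with $\tau_{\mathscr A}$.
   Context: Let $p\colon\mathbb{R}^2\to\mathbb{R}^2/\mathbb{Z}^2$ be the projection, $D_\epsilon=[0,1]^2\setminus[2\epsilon,1-2\epsilon]^2$, $P_\epsilon=p(D_\epsilon)$ (a once-punctured torus) with $\omega_0=dx\wedge dy$. Hamiltonian vector fields: $\omega_0(X_H,\cdot)=-dH$; $\varphi^t_H$ is the time-$t$ flow of an autonomous $H$. $Y_c$, $Y'_d$ are compactly supported vector fields on $P_\epsilon$ with $\mathcal L_{Y_c}\omega_0=\mathcal L_{Y'_d}\omega_0=0$, $Y_c=c\,\partial_x$ at $p(x,y)$ for $(x,y)\in([-\epsilon,\epsilon]\times\mathbb{R})\cup(\mathbb{R}\times[-\epsilon,\epsilon])$, and $Y'_d=-d\,\partial_y$ on the same set. $\tau_{\mathscr A}$, $\tau'_{\mathscr A}$ are the time-one maps of $Y_c$, $Y'_d$. For $0<r\le|q|\le\epsilon$: $I_{q,r}=(\frac{q-r}2,\frac{q+r}2)$,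 $J_{q,r}=[-\frac{|q|-r}2,\frac{|q|-r}2]$; $\rho_{q,r}\colon[-\epsilon,\epsilon]\to[-1,1]$ is smooth with $\mathrm{supp}\,\rho_{q,r}\subset(-\frac{|q|+r}2,\frac{|q|+r}2)$, $\rho_{q,r}(x)+\rho_{q,r}(x+q)=q/|q|$ for $x\in I_{-q,r}$, and $\rho_{q,r}=q/|q|$ on $J_{q,r}$. $H_{q,r}$ (resp. $H'_{q,r}$) is the function on $P_\epsilon$ induced by $(x,y)\mapsto-\rho_{q,r}(x)$ for $|x|\le\epsilon$, $0$ for $\epsilon<|x|\le1/2$ (resp. the same with $y$ in place of $x$). Let $\Delta=\min\{|c|,|d|\}$ if $c\ne0\ne d$, else $\Delta=\max\{|c|,|d|\}$. Define $\sigma^t_{\mathscr A}=\varphi^{bt}_{H_{c,\Delta}}$ on $p(I_{-c,\Delta}\times\mathbb{R})$ and the identity elsewhere; $\sigma'^t_{\mathscr A}=\varphi^{at}_{H'_{d,\Delta}}$ on $p(\mathbb{R}\times I_{-d,\Delta})$ and the identity elsewhere; $\sigma_{\mathscr A}=\sigma^1_{\mathscr A}$, $\sigma'_{\mathscr A}=\sigma'^1_{\mathscr A}$. Convention: if $c=0$ the pair $(c,\Delta)$ in the definition of $\sigma_{\mathscr A}$ is replaced by $(\epsilon,\epsilon)$ (so the region is $p(I_{-\epsilon,\epsilon}\times\mathbb R)$ and the function is $H_{\epsilon,\epsilon}$), and similarly if $d=0$ for $\sigma'_{\mathscr A}$. These are compactly supported symplectomorphisms of $(P_\epsilon,\omega_0)$.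 *)

(* Defs.v *)
From Stdlib Require Import Reals ClassicalDescription.
From Coquelicot Require Import Coquelicot.
Open Scope R_scope.

(* Points of R^2 are pairs; the torus R^2/Z^2 is handled through lifts:
   a point of the torus is represented by any z : R*R, and maps of the torus
   by (Z^2-equivariant) maps R*R -> R*R. *)
Definition eqT (z w : R * R) : Prop :=
  exists m n : Z, fst z - fst w = IZR m /\ snd z - snd w = IZR n.

(* centred representative of x mod 1, in [-1/2, 1/2) *)
Definition cmod (x : R) : R := x - IZR (Int_part (x + / 2)).

(* the removed square p([2eps,1-2eps]^2); P_eps is its complement *)
Definition puncture (eps : R) (z : R * R) : Prop :=
  2 * eps <= frac_part (fst z) <= 1 - 2 * eps /\
  2 * eps <= frac_part (snd z) <= 1 - 2 * eps.
Definition inP (eps : R) (z : R * R) : Prop := ~ puncture eps z.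

Definition in_cross (eps : R) (z : R * R) : Prop :=
  Rabs (cmod (fst z)) <= eps \/ Rabs (cmod (snd z)) <= eps.

Definition px (f : R * R -> R) (z : R * R) : R :=
  Derive (fun x => f (x, snd z)) (fst z).
Definition py (f : R * R -> R) (z : R * R) : R :=
  Derive (fun y => f (fst z, y)) (snd z).

(* iterated partial derivatives (true = d/dx, false = d/dy) *)
Fixpoint pdiff (l : list bool) (f : R * R -> R) : R * R -> R :=
  match l with
  | nil => f
  | cons b l' => if b then px (pdiff l' f) else py (pdiff l' f)
  end.

Definition smooth2 (f : R * R -> R) : Prop :=
  forall (l : list bool) (z : R * R),
    continuous (pdiff l f) z /\
    ex_derive (fun x => pdiff l f (x, snd z)) (fst z) /\
    ex_derive (fun y => pdiff l f (fst z, y)) (snd z).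

(* Y is a smooth vector field on the torus (Z^2-periodic on R^2),
   with L_Y omega0 = 0 (i.e. divergence free, since d(i_Y omega0) =
   (dY1/dx + dY2/dy) dx^dy), and with support compact in P_eps, i.e.
   support disjoint from the removed closed square. *)
Definition sym_vf (eps : R) (Y : R * R -> R * R) : Prop :=
  smooth2 (fun z => fst (Y z)) /\ smooth2 (fun z => snd (Y z)) /\
  (forall x y, Y (x + 1, y) = Y (x, y) /\ Y (x, y + 1) = Y (x, y)) /\
  (forall z, px (fun w => fst (Y w)) z + py (fun w => snd (Y w)) z = 0) /\
  (forall z, puncture eps z -> exists delta, 0 < delta /\
     forall w, Rabs (fst w - fst z) < delta -> Rabs (snd w - snd z) < delta ->
       Y w = (0, 0)).

Definition is_flow (X : R * R -> R * R) (phi : R -> R * R -> R * R) : Prop :=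
  (forall z, phi 0 z = z) /\
  (forall t z, is_derive (fun s => phi s z) t (X (phi t z))).

Definition two_sided_inv (f g : R * R -> R * R) : Prop :=
  (forall z, f (g z) = z) /\ (forall z, g (f z) = z).

(* Hamiltonian vector field: omega0(X_H, .) = - dH with omega0 = dx^dy,
   omega0(u,v) = u1 v2 - u2 v1, gives X_H = (- dH/dy, dH/dx). *)
Definition ham_vf (H : R * R -> R) (z : R * R) : R * R :=
  (- py H z, px H z).

Definition DeltaA (c d : R) : R :=
  if Req_EM_T c 0 then Rmax (Rabs c) (Rabs d)
  else if Req_EM_T d 0 then Rmax (Rabs c) (Rabs d)
  else Rmin (Rabs c) (Rabs d).

(* the pair (q,r) used for sigma (resp. sigma'), with the convention
   (0, DeltaA) |-> (eps, eps) *)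
Definition sq (eps q : R) : R := if Req_EM_T q 0 then eps else q.
Definition sr (eps q D : R) : R := if Req_EM_T q 0 then eps else D.

(* rho_{q,r}: a smooth function [-eps,eps] -> [-1,1] with support in
   (-(|q|+r)/2, (|q|+r)/2); represented by its extension by 0 to R. *)
Definition rho_ok (q r : R) (rho : R -> R) : Prop :=
  (forall x, -1 <= rho x <= 1) /\
  (forall n x, ex_derive_n rho n x) /\
  (exists s, 0 <= s < (Rabs q + r) / 2 /\ forall x, s < Rabs x -> rho x = 0) /\
  (forall x, (- q - r) / 2 < x < (- q + r) / 2 -> rho x + rho (x + q) = q / Rabs q) /\
  (forall x, - ((Rabs q - r) / 2) <= x <= (Rabs q - r) / 2 -> rho x = q / Rabs q).

Definition Hx (eps : R) (rho : R -> R) (z : R * R) : R :=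
  if Rle_dec (Rabs (cmod (fst z))) eps then - rho (cmod (fst z)) else 0.
Definition Hy (eps : R) (rho : R -> R) (z : R * R) : R :=
  if Rle_dec (Rabs (cmod (snd z))) eps then - rho (cmod (snd z)) else 0.

Definition inI (q r x : R) : Prop := (- q - r) / 2 < x < (- q + r) / 2.

Definition sigmaA (q r b : R) (phiH : R -> R * R -> R * R) (z : R * R) : R * R :=
  if excluded_middle_informative (inI q r (cmod (fst z))) then phiH b z else z.
Definition sigmaA' (q r a : R) (phiH : R -> R * R -> R * R) (z : R * R) : R * R :=
  if excluded_middle_informative (inI q r (cmod (snd z))) then phiH a z else z.

(* Main.v *)
Require Import Defs.
From Stdlib Require Import Reals ClassicalDescription Lra Lia.
From Coquelicot Require Import Coquelicot.
Open Scope R_scope.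

Lemma deriv_fst (f : R -> R * R) t l :
  is_derive f t l -> is_derive (fun s => fst (f s)) t (fst l).
Proof.
  intro H. unfold is_derive in *.
  apply (filterdiff_comp' f (fun p : R*R => fst p) t _ (fun p : R*R => fst p) H).
  apply filterdiff_linear, is_linear_fst.
Qed.

Lemma deriv_snd (f : R -> R * R) t l :
  is_derive f t l -> is_derive (fun s => snd (f s)) t (snd l).
Proof.
  intro H. unfold is_derive in *.
  apply (filterdiff_comp' f (fun p : R*R => snd p) t _ (fun p : R*R => snd p) H).
  apply filterdiff_linear, is_linear_snd.
Qed.

Lemma deriv0_const (f : R -> R) : (forall t, is_derive f t 0) -> forall t, f t = f 0.
Proof.
  intros H t. destruct (Rtotal_order t 0) as [h|[h|h]].
  - apply (eq_is_derive f t 0); auto.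
  - subst; auto.
  - symmetry; apply (eq_is_derive f 0 t); auto.
Qed.

Lemma py_Hx eps rho p : py (Hx eps rho) p = 0.
Proof. unfold py, Hx; simpl. apply Derive_const. Qed.
Lemma px_Hy eps rho p : px (Hy eps rho) p = 0.
Proof. unfold px, Hy; simpl. apply Derive_const. Qed.
Lemma px_Hx_snd eps rho x y y' : px (Hx eps rho) (x, y) = px (Hx eps rho) (x, y').
Proof. reflexivity. Qed.
Lemma py_Hy_fst eps rho x x' y : py (Hy eps rho) (x, y) = py (Hy eps rho) (x', y).
Proof. reflexivity. Qed.

Lemma ham_flow eps rho phi : is_flow (ham_vf (Hx eps rho)) phi ->
  forall t z, phi t z = (fst z, snd z + t * px (Hx eps rho) z).
Proof.
  intros [H0 HD] t z.
  assert (F : forall s, fst (phi s z) = fst z).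
  { intro s. rewrite <- (H0 z) at 2.
    apply (deriv0_const (fun s => fst (phi s z))). intro u.
    pose proof (deriv_fst _ _ _ (HD u z)) as K. simpl in K.
    rewrite py_Hx, Ropp_0 in K. exact K. }
  assert (S : forall s, snd (phi s z) - s * px (Hx eps rho) z = snd z).
  { intro s. 
    transitivity (snd (phi 0 z) - 0 * px (Hx eps rho) z).
    2: rewrite H0; ring.
    apply (deriv0_const (fun s => snd (phi s z) - s * px (Hx eps rho) z)). intro u.
    pose proof (deriv_snd _ _ _ (HD u z)) as K. simpl in K.
    replace 0 with (px (Hx eps rho) (phi u z) - px (Hx eps rho) z).
    2:{ rewrite (surjective_pairing (phi u z)), F. unfold px, Hx; simpl. ring. }
    apply (is_derive_minus (fun s => snd (phi s z)) (fun s => s * px (Hx eps rho) z)). exact K.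
    auto_derive; auto; ring. }
  rewrite (surjective_pairing (phi t z)), F. f_equal. rewrite <- (S t). ring.
Qed.

Lemma ham_flow' eps rho phi : is_flow (ham_vf (Hy eps rho)) phi ->
  forall t z, phi t z = (fst z - t * py (Hy eps rho) z, snd z).
Proof.
  intros [H0 HD] t z.
  assert (F : forall s, snd (phi s z) = snd z).
  { intro s. rewrite <- (H0 z) at 2.
    apply (deriv0_const (fun s => snd (phi s z))). intro u.
    pose proof (deriv_snd _ _ _ (HD u z)) as K. simpl in K.
    rewrite px_Hy in K. exact K. }
  assert (S : forall s, fst (phi s z) + s * py (Hy eps rho) z = fst z).
  { intro s. 
    transitivity (fst (phi 0 z) + 0 * py (Hy eps rho) z).
    2: rewrite H0; ring.
    apply (deriv0_const (fun s => fst (phi s z) + s * py (Hy eps rho) z)). intro u.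
    pose proof (deriv_fst _ _ _ (HD u z)) as K. simpl in K.
    replace 0 with (- py (Hy eps rho) (phi u z) + py (Hy eps rho) z).
    2:{ rewrite (surjective_pairing (phi u z)), F. unfold py, Hy; simpl. ring. }
    apply (is_derive_plus (fun s => fst (phi s z)) (fun s => s * py (Hy eps rho) z)). exact K.
    auto_derive; auto; ring. }
  rewrite (surjective_pairing (phi t z)), F. f_equal. rewrite <- (S t). ring.
Qed.
Lemma cont_eps (f : R -> R) x : ex_derive f x ->
  forall e, 0 < e -> exists d, 0 < d /\ forall s, Rabs (s - x) < d -> Rabs (f s - f x) < e.
Proof.
  intros H e He. apply ex_derive_continuous in H.
  apply continuity_pt_filterlim in H.
  destruct (H e He) as [d [Hd Hs]]. exists d; split; auto.
  intros s Hs'. destruct (Req_dec s x) as [->|n].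
  - rewrite Rminus_eq_0, Rabs_R0; auto.
  - apply Hs. split. unfold D_x, no_cond; auto. exact Hs'.
Qed.

Lemma flow_line (Y : R * R -> R * R) phi (v z : R * R) (S : R * R -> Prop) :
  is_flow Y phi ->
  (forall p, S p -> Y p = v) ->
  (forall p, S p -> exists del, 0 < del /\ forall q,
      Rabs (fst q - fst p) < del -> Rabs (snd q - snd p) < del -> S q) ->
  (forall t, 0 <= t <= 1 -> S (fst z + t * fst v, snd z + t * snd v)) ->
  phi 1 z = (fst z + fst v, snd z + snd v).
Proof.
  intros [H0 HD] HY HO HL.
  set (f1 := fun s => fst (phi s z) - (fst z + s * fst v)).
  set (f2 := fun s => snd (phi s z) - (snd z + s * snd v)).
  assert (D1 : forall s, is_derive f1 s (fst (Y (phi s z)) - fst v)).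
  { intro s. unfold f1. apply (is_derive_minus (fun s => fst (phi s z))).
    apply deriv_fst, HD. auto_derive; auto; ring. }
  assert (D2 : forall s, is_derive f2 s (snd (Y (phi s z)) - snd v)).
  { intro s. unfold f2. apply (is_derive_minus (fun s => snd (phi s z))).
    apply deriv_snd, HD. auto_derive; auto; ring. }
  assert (EQ : forall s, f1 s = 0 -> f2 s = 0 ->
     phi s z = (fst z + s * fst v, snd z + s * snd v)).
  { intros s e1 e2. unfold f1, f2 in *. rewrite (surjective_pairing (phi s z)).
    f_equal; lra. }
  assert (LOC : forall T, 0 <= T <= 1 -> f1 T = 0 -> f2 T = 0 ->
     exists dl, 0 < dl /\ forall s, Rabs (s - T) < dl -> f1 s = 0 /\ f2 s = 0).
  { intros T HT e1 e2.
    destruct (HO _ (HL T HT)) as [del [Hdel Hq]].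
    destruct (cont_eps (fun s => fst (phi s z)) T (ex_intro _ _ (deriv_fst _ _ _ (HD T z))) del Hdel)
      as [d1 [Hd1 C1]].
    destruct (cont_eps (fun s => snd (phi s z)) T (ex_intro _ _ (deriv_snd _ _ _ (HD T z))) del Hdel)
      as [d2 [Hd2 C2]].
    assert (PT := EQ T e1 e2).
    assert (IN : forall s, Rabs (s - T) < Rmin d1 d2 -> Y (phi s z) = v).
    { intros s Hs. apply HY. apply Hq; rewrite <- PT.
      - apply C1. pose proof (Rmin_l d1 d2); lra.
      - apply C2. pose proof (Rmin_r d1 d2); lra. }
    exists (Rmin d1 d2). split. apply Rmin_glb_lt; auto.
    assert (Z1 : forall s, Rabs (s - T) < Rmin d1 d2 -> is_derive f1 s zero).
    { intros s Hs. replace (@zero R_NormedModule) with (fst (Y (phi s z)) - fst v).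
      apply D1. rewrite IN; auto. simpl. unfold zero; simpl. ring. }
    assert (Z2 : forall s, Rabs (s - T) < Rmin d1 d2 -> is_derive f2 s zero).
    { intros s Hs. replace (@zero R_NormedModule) with (snd (Y (phi s z)) - snd v).
      apply D2. rewrite IN; auto. simpl. unfold zero; simpl. ring. }
    intros s Hs. destruct (Rtotal_order s T) as [h|[h|h]].
    - split.
      + rewrite <- e1. apply (eq_is_derive f1 s T); auto. intros u Hu. apply Z1.
        apply Rabs_def1; apply Rabs_def2 in Hs; lra.
      + rewrite <- e2. apply (eq_is_derive f2 s T); auto. intros u Hu. apply Z2.
        apply Rabs_def1; apply Rabs_def2 in Hs; lra.
    - subst; auto.
    - split.
      + rewrite <- e1. symmetry. apply (eq_is_derive f1 T s); auto. intros u Hu. apply Z1.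
        apply Rabs_def1; apply Rabs_def2 in Hs; lra.
      + rewrite <- e2. symmetry. apply (eq_is_derive f2 T s); auto. intros u Hu. apply Z2.
        apply Rabs_def1; apply Rabs_def2 in Hs; lra. }
  set (A := fun t => 0 <= t <= 1 /\ forall s, 0 <= s <= t -> f1 s = 0 /\ f2 s = 0).
  assert (A0 : A 0).
  { split. lra. intros s Hs. replace s with 0 by lra. unfold f1, f2. rewrite H0. split; ring. }
  destruct (completeness A) as [T [HT1 HT2]].
  { exists 1. intros t [h _]. lra. }
  { exists 0; auto. }
  assert (T0 : 0 <= T) by (apply HT1; auto).
  assert (T1 : T <= 1) by (apply HT2; intros t [h _]; lra).
  assert (C1 : forall s, 0 <= s < T -> f1 s = 0 /\ f2 s = 0).
  { intros s Hs. destruct (Classical_Prop.classic (exists t, A t /\ s < t)) as [[t [[_ Ht] Hst]]|n].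
    - apply Ht; lra.
    - exfalso. assert (T <= s). { apply HT2. intros t At. apply Rnot_lt_le. intro. apply n; eauto. }
      lra. }
  assert (C2 : f1 T = 0 /\ f2 T = 0).
  { destruct (Req_dec T 0) as [->|nT]. apply A0; lra.
    assert (Tp : 0 < T) by (destruct T0 as [h|h]; [exact h| congruence]).
    assert (K : forall f : R -> R, ex_derive f T -> (forall s, 0 <= s < T -> f s = 0) -> f T = 0).
    { intros f Hf Hz. apply Rabs_eq_0. apply Rle_antisym. 2: apply Rabs_pos.
      apply Rnot_lt_le. intro Hp.
      destruct (cont_eps f T Hf _ Hp) as [d [Hd Hc]].
      set (s := Rmax 0 (T - d/2)).
      assert (0 <= s < T /\ Rabs (s - T) < d).
      { assert (Q0 : s < T) by (unfold s; apply Rmax_lub_lt; lra).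
        assert (Q1 : 0 <= s) by apply Rmax_l. assert (Q2 : T - d/2 <= s) by apply Rmax_r.
        split. lra. apply Rabs_def1; lra. }
      specialize (Hc s (proj2 H)). rewrite Hz in Hc by apply H.
      rewrite Rminus_0_l, Rabs_Ropp in Hc. lra. }
    split; apply K. eexists; apply D1. intros; apply C1; auto.
    eexists; apply D2. intros; apply C1; auto. }
  assert (TT : T = 1).
  { destruct (Req_dec T 1) as [e|n]; auto. exfalso.
    destruct (LOC T (conj T0 T1) (proj1 C2) (proj2 C2)) as [dl [Hdl Hl]].
    set (t' := Rmin 1 (T + dl/2)).
    assert (T < t').
    { unfold t'. apply Rmin_glb_lt; lra. }
    assert (A t').
    { split. split. lra. apply Rmin_l. intros s Hs.
      destruct (Rlt_dec s T). apply C1; lra. apply Hl.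
      pose proof (Rmin_r 1 (T + dl/2)). fold t' in H1. apply Rabs_def1; lra. }
    pose proof (HT1 _ H1). lra. }
  rewrite TT in C2. rewrite (EQ 1 (proj1 C2) (proj2 C2)). f_equal; ring.
Qed.

Lemma Int_part_uniq r (n : Z) : IZR n <= r < IZR n + 1 -> Int_part r = n.
Proof.
  intros [h1 h2]. destruct (base_Int_part r) as [b1 b2].
  assert (k1 : (Int_part r < n + 1)%Z) by (apply lt_IZR; rewrite plus_IZR; simpl; lra).
  assert (k2 : (n < Int_part r + 1)%Z) by (apply lt_IZR; rewrite plus_IZR; simpl; lra).
  lia.
Qed.

Lemma cmod_eq x (n : Z) : - / 2 <= x - IZR n < / 2 -> cmod x = x - IZR n.
Proof.
  intro h. unfold cmod. rewrite (Int_part_uniq (x + / 2) n); auto. lra.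
Qed.

Lemma cmod_near x : exists n : Z, cmod x = x - IZR n.
Proof. exists (Int_part (x + / 2)). reflexivity. Qed.

Definition SV (eps : R) (p : R * R) : Prop := exists n : Z, Rabs (fst p - IZR n) < eps.
Definition SH (eps : R) (p : R * R) : Prop := exists n : Z, Rabs (snd p - IZR n) < eps.

Lemma SV_cross eps p : eps < / 4 -> SV eps p -> in_cross eps p.
Proof.
  intros he [n hn]. left. apply Rabs_def2 in hn.
  rewrite (cmod_eq _ n) by lra. apply Rabs_le; lra.
Qed.
Lemma SH_cross eps p : eps < / 4 -> SH eps p -> in_cross eps p.
Proof.
  intros he [n hn]. right. apply Rabs_def2 in hn.
  rewrite (cmod_eq _ n) by lra. apply Rabs_le; lra.
Qed.

Lemma SV_open eps p : SV eps p -> exists del, 0 < del /\ forall q,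
      Rabs (fst q - fst p) < del -> Rabs (snd q - snd p) < del -> SV eps q.
Proof.
  intros [n hn]. exists (eps - Rabs (fst p - IZR n)). split. lra.
  intros q h1 _. exists n. apply Rabs_def2 in h1. 
  destruct (Rabs_def2 _ _ hn). apply Rabs_def1;
  destruct (Rcase_abs (fst p - IZR n)) as [k|k];
  [rewrite (Rabs_left _ k) in h1 | rewrite (Rabs_right _ k) in h1| rewrite (Rabs_left _ k) in h1 | rewrite (Rabs_right _ k) in h1]; lra.
Qed.
Lemma SH_open eps p : SH eps p -> exists del, 0 < del /\ forall q,
      Rabs (fst q - fst p) < del -> Rabs (snd q - snd p) < del -> SH eps q.
Proof.
  intros [n hn]. exists (eps - Rabs (snd p - IZR n)). split. lra.
  intros q _ h1. exists n. apply Rabs_def2 in h1. 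
  destruct (Rabs_def2 _ _ hn). apply Rabs_def1;
  destruct (Rcase_abs (snd p - IZR n)) as [k|k];
  [rewrite (Rabs_left _ k) in h1 | rewrite (Rabs_right _ k) in h1| rewrite (Rabs_left _ k) in h1 | rewrite (Rabs_right _ k) in h1]; lra.
Qed.

Lemma strip_ok eps q0 D x t : 0 < eps -> Rabs q0 <= eps -> (q0 <> 0 -> D <= Rabs q0) ->
  inI (sq eps q0) (sr eps q0 D) x -> 0 <= t <= 1 -> Rabs (x + t * q0) < eps.
Proof.
  intros he hq hD hI ht. unfold inI, sq, sr in hI.
  destruct (Req_EM_T q0 0) as [e|n].
  - subst. apply Rabs_def1; lra.
  - specialize (hD n). destruct (Rcase_abs q0) as [k|k].
    + rewrite (Rabs_left _ k) in hD, hq.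
      assert (q0 <= t * q0 <= 0) by nra. apply Rabs_def1; lra.
    + rewrite (Rabs_right _ k) in hD, hq.
      assert (0 <= t * q0 <= q0) by nra. apply Rabs_def1; lra.
Qed.

Lemma DeltaA_c c d : c <> 0 -> DeltaA c d <= Rabs c.
Proof.
  intro h. unfold DeltaA. destruct (Req_EM_T c 0); [contradiction|].
  destruct (Req_EM_T d 0) as [e|e].
  - subst. rewrite Rabs_R0. apply Rmax_lub. lra. apply Rabs_pos.
  - apply Rmin_l.
Qed.
Lemma DeltaA_d c d : d <> 0 -> DeltaA c d <= Rabs d.
Proof.
  intro h. unfold DeltaA. destruct (Req_EM_T c 0) as [e|e].
  - subst. rewrite Rabs_R0. apply Rmax_lub. apply Rabs_pos. lra.
  - destruct (Req_EM_T d 0); [contradiction|]. apply Rmin_r.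
Qed.

Theorem lemma3p2
  (eps a b c d : R)
  (Y Y' : R * R -> R * R)                    (* Y_c, Y'_d *)
  (phiY phiY' : R -> R * R -> R * R)         (* their flows *)
  (tinv tinv' : R * R -> R * R)              (* tau^{-1}, tau'^{-1} *)
  (rho rho' : R -> R)                        (* rho_{q,r} for sigma, sigma' *)
  (phiH phiH' : R -> R * R -> R * R)         (* Hamiltonian flows *)
  (sinv sinv' : R * R -> R * R) :            (* sigma^{-1}, sigma'^{-1} *)
  0 < eps < / 4 -> Rabs c <= eps -> Rabs d <= eps ->
  sym_vf eps Y -> (forall z, in_cross eps z -> Y z = pair c 0) ->
  sym_vf eps Y' -> (forall z, in_cross eps z -> Y' z = pair 0 (- d)) ->
  is_flow Y phiY -> is_flow Y' phiY' ->
  two_sided_inv (phiY 1) tinv -> two_sided_inv (phiY' 1) tinv' ->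
  rho_ok (sq eps c) (sr eps c (DeltaA c d)) rho ->
  rho_ok (sq eps d) (sr eps d (DeltaA c d)) rho' ->
  is_flow (ham_vf (Hx eps rho)) phiH ->
  is_flow (ham_vf (Hy eps rho')) phiH' ->
  two_sided_inv (sigmaA (sq eps c) (sr eps c (DeltaA c d)) b phiH) sinv ->
  two_sided_inv (sigmaA' (sq eps d) (sr eps d (DeltaA c d)) a phiH') sinv' ->
  let tau := phiY 1 in
  let tau' := phiY' 1 in
  let sigma := sigmaA (sq eps c) (sr eps c (DeltaA c d)) b phiH in
  let sigma' := sigmaA' (sq eps d) (sr eps d (DeltaA c d)) a phiH' in
  (* (1) sigma commutes with tau sigma^{-1} tau^{-1} *)
  (forall z, inP eps z ->
     eqT (sigma (tau (sinv (tinv z)))) (tau (sinv (tinv (sigma z))))) /\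
  (* (2) sigma' commutes with tau'^{-1} sigma'^{-1} tau' *)
  (forall z, inP eps z ->
     eqT (sigma' (tinv' (sinv' (tau' z)))) (tinv' (sinv' (tau' (sigma' z))))) /\
  (* (3) sigma commutes with tau', sigma' commutes with tau *)
  (forall z, inP eps z -> eqT (sigma (tau' z)) (tau' (sigma z))) /\
  (forall z, inP eps z -> eqT (sigma' (tau z)) (tau (sigma' z))).
Proof.
  intros Heps Hc Hd _ HY _ HY' FY FY' [TI1 TI2] [TI1' TI2'] _ _ FH FH' [SI1 SI2] [SI1' SI2'].
  intros tau tau' sigma sigma'.
  set (q := sq eps c). set (r := sr eps c (DeltaA c d)).
  set (q' := sq eps d). set (r' := sr eps d (DeltaA c d)).
  set (Kx := fun x => px (Hx eps rho) (x, 0)).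
  set (Ky := fun y => py (Hy eps rho') (0, y)).
  assert (SIGin : forall z, inI q r (cmod (fst z)) -> sigma z = (fst z, snd z + b * Kx (fst z))).
  { intros [x y] h. unfold sigma, sigmaA. destruct (excluded_middle_informative _) as [_|n];
    [|contradiction]. rewrite (ham_flow _ _ _ FH). reflexivity. }
  assert (SIGout : forall z, ~ inI q r (cmod (fst z)) -> sigma z = z).
  { intros z h. unfold sigma, sigmaA. destruct (excluded_middle_informative _); tauto. }
  assert (SIGin' : forall z, inI q' r' (cmod (snd z)) -> sigma' z = (fst z - a * Ky (snd z), snd z)).
  { intros [x y] h. unfold sigma', sigmaA'. destruct (excluded_middle_informative _) as [_|n];
    [|contradiction]. rewrite (ham_flow' _ _ _ FH'). reflexivity. }
  assert (SIGout' : forall z, ~ inI q' r' (cmod (snd z)) -> sigma' z = z).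
  { intros z h. unfold sigma', sigmaA'. destruct (excluded_middle_informative _); tauto. }
  assert (STc : forall x t, inI q r x -> 0 <= t <= 1 -> Rabs (x + t * c) < eps).
  { intros. apply (strip_ok eps c (DeltaA c d)); auto; try lra. apply DeltaA_c. }
  assert (STd : forall x t, inI q' r' x -> 0 <= t <= 1 -> Rabs (x + t * d) < eps).
  { intros. apply (strip_ok eps d (DeltaA c d)); auto; try lra. apply DeltaA_d. }
  assert (TAU_V : forall w, inI q r (cmod (fst w)) -> tau w = (fst w + c, snd w)).
  { intros w h. destruct (cmod_near (fst w)) as [n hn]. unfold tau.
    rewrite (flow_line Y phiY (c,0) w (SV eps) FY). simpl; f_equal; ring.
    - intros p hp; apply HY, SV_cross; auto; lra.
    - apply SV_open.
    - intros t ht; exists n; simpl.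
      replace (fst w + t * c - IZR n) with (cmod (fst w) + t * c) by (rewrite hn; ring). auto. }
  assert (TAUp_V : forall w, inI q r (cmod (fst w)) -> tau' w = (fst w, snd w - d)).
  { intros w h. destruct (cmod_near (fst w)) as [n hn]. unfold tau'.
    rewrite (flow_line Y' phiY' (0,-d) w (SV eps) FY'). simpl; f_equal; ring.
    - intros p hp; apply HY', SV_cross; auto; lra.
    - apply SV_open.
    - intros t ht; exists n; simpl.
      replace (fst w + t * 0 - IZR n) with (cmod (fst w) + 0 * c) by (rewrite hn; ring). apply STc; auto; lra. }
  assert (TAU_H : forall w, inI q' r' (cmod (snd w - d)) -> tau' w = (fst w, snd w - d)).
  { intros w h. destruct (cmod_near (snd w - d)) as [n hn]. unfold tau'.
    rewrite (flow_line Y' phiY' (0,-d) w (SH eps) FY'). simpl; f_equal; ring.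
    - intros p hp; apply HY', SH_cross; auto; lra.
    - apply SH_open.
    - intros t ht; exists n; simpl.
      replace (snd w + t * - d - IZR n) with (cmod (snd w - d) + (1 - t) * d) by (rewrite hn; ring). apply STd; auto; lra. }
  assert (TAU_H' : forall w, inI q' r' (cmod (snd w)) -> tau w = (fst w + c, snd w)).
  { intros w h. destruct (cmod_near (snd w)) as [n hn]. unfold tau.
    rewrite (flow_line Y phiY (c,0) w (SH eps) FY). simpl; f_equal; ring.
    - intros p hp; apply HY, SH_cross; auto; lra.
    - apply SH_open.
    - intros t ht; exists n; simpl.
      replace (snd w + t * 0 - IZR n) with (cmod (snd w) + 0 * d) by (rewrite hn; ring). apply STd; auto; lra. }
  assert (EQT : forall p p', p = p' -> eqT p p').
  { intros p p' ->. exists 0%Z, 0%Z. simpl. split; ring. }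
  assert (G1in : forall z, inI q r (cmod (fst z - c)) -> tau (sinv (tinv z)) = (fst z, snd z - b * Kx (fst z - c))).
  { intros z h. set (w := (fst z - c, snd z)).
    assert (tau w = z) by (rewrite TAU_V; auto; destruct z; simpl; f_equal; ring).
    rewrite <- H at 1. rewrite TI2.
    assert (sigma (fst w, snd w - b * Kx (fst w)) = w).
    { rewrite SIGin; simpl; auto. unfold w; simpl; f_equal; ring. }
    rewrite <- H0 at 1. rewrite SI2, TAU_V by (simpl; auto). simpl. f_equal; ring. }
  assert (G1out : forall z, ~ inI q r (cmod (fst z - c)) -> tau (sinv (tinv z)) = z).
  { intros z h. set (u := tinv z). assert (Hu : tau u = z) by apply TI1.
    destruct (Classical_Prop.classic (inI q r (cmod (fst u)))) as [k|k].
    - exfalso. apply h. rewrite <- Hu, TAU_V by auto. simpl. replace (fst u + c - c) with (fst u) by ring. auto.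
    - rewrite <- (SIGout u k) at 1. rewrite SI2. auto. }
  assert (P1 : forall z, sigma (tau (sinv (tinv z))) = tau (sinv (tinv (sigma z)))).
  { intros [x y].
    destruct (Classical_Prop.classic (inI q r (cmod x))) as [A|A];
    destruct (Classical_Prop.classic (inI q r (cmod (x - c)))) as [B|B].
    - rewrite G1in, SIGin, SIGin, G1in; simpl; auto. f_equal; ring.
    - rewrite G1out, SIGin, G1out; simpl; auto.
    - rewrite G1in, SIGout, SIGout, G1in; simpl; auto.
    - rewrite G1out, SIGout, G1out; simpl; auto. }
  assert (G2in : forall z, inI q' r' (cmod (snd z - d)) -> tinv' (sinv' (tau' z)) = (fst z + a * Ky (snd z - d), snd z)).
  { intros z h. rewrite TAU_H by auto.
    assert (sigma' (fst z + a * Ky (snd z - d), snd z - d) = (fst z, snd z - d)).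
    { rewrite SIGin'; simpl; auto. f_equal; ring. }
    rewrite <- H at 1. rewrite SI2'.
    assert (tau' (fst z + a * Ky (snd z - d), snd z) = (fst z + a * Ky (snd z - d), snd z - d)).
    { rewrite TAU_H; simpl; auto. }
    rewrite <- H0. rewrite TI2'. reflexivity. }
  assert (G2out : forall z, ~ inI q' r' (cmod (snd z - d)) -> tinv' (sinv' (tau' z)) = z).
  { intros z h. set (u := tau' z).
    destruct (Classical_Prop.classic (inI q' r' (cmod (snd u)))) as [k|k].
    - exfalso. apply h. set (w := (fst u, snd u + d)).
      assert (tau' w = u).
      { rewrite TAU_H; unfold w; simpl. destruct u; simpl; f_equal; ring.
        replace (snd u + d - d) with (snd u) by ring. auto. }
      assert (z = w). { rewrite <- (TI2' z), <- (TI2' w). fold tau'. fold u. rewrite H. reflexivity. }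
      rewrite H0. unfold w; simpl. replace (snd u + d - d) with (snd u) by ring. auto.
    - rewrite <- (SIGout' u k) at 1. rewrite SI2'. apply TI2'. }
  assert (P2 : forall z, sigma' (tinv' (sinv' (tau' z))) = tinv' (sinv' (tau' (sigma' z)))).
  { intros [x y].
    destruct (Classical_Prop.classic (inI q' r' (cmod y))) as [A|A];
    destruct (Classical_Prop.classic (inI q' r' (cmod (y - d)))) as [B|B].
    - rewrite G2in, SIGin', SIGin', G2in; simpl; auto. f_equal; ring.
    - rewrite G2out, SIGin', G2out; simpl; auto.
    - rewrite G2in, SIGout', SIGout', G2in; simpl; auto.
    - rewrite G2out, SIGout', G2out; simpl; auto. }
  assert (P3 : forall z, sigma (tau' z) = tau' (sigma z)).
  { intros [x y].
    destruct (Classical_Prop.classic (inI q r (cmod x))) as [A|A].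
    - rewrite TAUp_V, SIGin, SIGin, TAUp_V; simpl; auto. f_equal; ring.
    - rewrite (SIGout (x, y)) by auto. set (u := tau' (x, y)).
      destruct (Classical_Prop.classic (inI q r (cmod (fst u)))) as [k|k].
      + exfalso. apply A. set (w := (fst u, snd u + d)).
        assert (tau' w = u).
        { rewrite TAUp_V; unfold w; simpl; auto. destruct u; simpl; f_equal; ring. }
        assert ((x, y) = w). { rewrite <- (TI2' (x, y)), <- (TI2' w). fold tau'. fold u. rewrite H. reflexivity. }
        replace x with (fst w) by (rewrite <- H0; reflexivity). unfold w; simpl; auto.
      + apply SIGout; auto. }
  assert (P4 : forall z, sigma' (tau z) = tau (sigma' z)).
  { intros [x y].
    destruct (Classical_Prop.classic (inI q' r' (cmod y))) as [A|A].
    - rewrite TAU_H', SIGin', SIGin', TAU_H'; simpl; auto. f_equal; ring.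
    - rewrite (SIGout' (x, y)) by auto. set (u := tau (x, y)).
      destruct (Classical_Prop.classic (inI q' r' (cmod (snd u)))) as [k|k].
      + exfalso. apply A. set (w := (fst u - c, snd u)).
        assert (tau w = u).
        { rewrite TAU_H'; unfold w; simpl; auto. destruct u; simpl; f_equal; ring. }
        assert ((x, y) = w). { rewrite <- (TI2 (x, y)), <- (TI2 w). fold tau. fold u. rewrite H. reflexivity. }
        replace y with (snd w) by (rewrite <- H0; reflexivity). unfold w; simpl; auto.
      + apply SIGout'; auto. }
  split; [|split; [|split]]; intros z _; apply EQT; auto.
Qed.
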